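(* Suppose $w\in\mathbb{Z}^A$ induces the triangulation $Z$. Then there is a constant $a>0$, independent of $\delta$, such that for all sufficiently small $\delta>0$ and every $x\in P_\Sigma$, the set $S_x=\{m\in A:\rho_m(x)>\delta^a\}$ is the vertex set of a simplex (of some dimension $0,1$ or $2$) of $Z$.
   Context: Let $M\cong\mathbb{Z}^2$, $\Delta\subset M_{\mathbb{R}}$ a 2-dimensional lattice polygon, $A=\Delta\cap M$, $P_\Sigma$ the projective toric surface of the normal fan of $\Delta$ with torus $(\mathbb{C}^* )^2$, $s_m(x)=x^m$ for $m\in A$. For $w\in\mathbb{Z}^A$, $\delta\in(0,1)$: $\rho_m=\delta^{2w_m}|s_m|^2/\sum_{m'\in A}\delta^{2w_{m'}}|s_{m'}|^2$ (extended continuously to $P_\Sigma$). We say $w$ induces the triangulation $Z$ if $Z$ is a triangulation of $\Delta$ whose vertex set is all of $A$, each triangle of $Z$ containing no lattice points other than its vertices, such that for every simplex $\sigma$ of $Z$ there is an affine function $\ell_\sigma:M_{\mathbb{R}}\to\mathbb{R}$ with $w_m=\ell_\sigma(m)$ for vertices $m$ of $\sigma$ and $w_m>\ell_\sigma(m)$ for all other $m\in A$ (i.e. $Z$ is the strictly convex regular triangulation given by the lower convex hull of $\{(m,w_m)\}$). Simplices of $Z$ are identified with their vertex sets $S\subset A$; we write $S\in Z$. *)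

(* Defs.v *)
From HB Require Import structures.
From mathcomp Require Import all_boot all_order all_algebra.
From mathcomp Require Import finmap.
From mathcomp Require Import all_classical all_reals all_analysis.
From mathcomp Require complex.
Set Implicit Arguments. Unset Strict Implicit. Unset Printing Implicit Defensive.
Import Order.TTheory GRing.Theory Num.Theory.
Local Open Scope ring_scope.

Notation lpt := (int * int)%type.

Section Defs.
Variable R : realType.

Definition rx (m : lpt) : R := (m.1)%:~R.
Definition ry (m : lpt) : R := (m.2)%:~R.

Definition in_conv (S : {fset lpt}) (px py : R) : Prop :=
  exists lam : lpt -> R,
    (forall v, v \in S -> 0 <= lam v) /\
    \sum_(v <- S) lam v = 1 /\
    \sum_(v <- S) lam v * rx v = px /\
    \sum_(v <- S) lam v * ry v = py.

Definition aff_indep (S : {fset lpt}) : Prop :=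
  forall lam : lpt -> R,
    \sum_(v <- S) lam v = 0 ->
    \sum_(v <- S) lam v * rx v = 0 ->
    \sum_(v <- S) lam v * ry v = 0 ->
    forall v, v \in S -> lam v = 0.

(* Delta = conv V is a 2-dimensional lattice polygon (V a finite set of
   lattice points not all on a line) and A = Delta \cap M. *)
Definition lattice_polygon_points (V A : {fset lpt}) : Prop :=
  (exists u v t, [/\ u \in V, v \in V, t \in V & aff_indep [fset u; v; t]%fset]) /\
  (forall m : lpt, m \in A <-> in_conv V (rx m) (ry m)).

(* Z (a finite set of simplices, identified with their vertex sets) is a
   triangulation of Delta = conv V. *)
Definition triangulation (V : {fset lpt}) (Z : {fset {fset lpt}}) : Prop :=
  [/\
      (forall S, S \in Z -> S != fset0 /\ aff_indep S),
      (forall S T, S \in Z -> (T `<=` S)%fset -> T != fset0 -> T \in Z),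
      (forall S T, S \in Z -> T \in Z -> forall px py,
          (in_conv S px py /\ in_conv T px py) <-> in_conv (S `&` T)%fset px py)
    &
      (forall px py, in_conv V px py <-> exists2 S, S \in Z & in_conv S px py)].

(* "w induces the triangulation Z" (w : Z^A, only its values on A matter) *)
Definition induces (V A : {fset lpt}) (w : lpt -> int) (Z : {fset {fset lpt}})
  : Prop :=
  [/\ triangulation V Z,
      (forall S, S \in Z -> (S `<=` A)%fset),
      (forall m, m \in A -> [fset m]%fset \in Z),
      (forall S, S \in Z -> (#|` S| = 3)%N ->
         forall m : lpt, in_conv S (rx m) (ry m) -> m \in S)
    & (* regularity / strict convexity w.r.t. the heights w *)
      (forall S, S \in Z -> exists c0 c1 c2 : R, forall m, m \in A ->
         (m \in S -> (w m)%:~R = c0 + c1 * rx m + c2 * ry m) /\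
         (m \notin S -> (w m)%:~R > c0 + c1 * rx m + c2 * ry m))].

Definition sqabs (z : complex.complex R) : R :=
  (complex.Re z) ^+ 2 + (complex.Im z) ^+ 2.

(* |s_m(x)|^2 = |x1|^(2 m1) |x2|^(2 m2) for x = (x1,x2) in the torus (C^* )^2 *)
Definition abs2_char (x : complex.complex R * complex.complex R) (m : lpt) : R :=
  (sqabs x.1) ^ m.1 * (sqabs x.2) ^ m.2.

Definition rho (A : {fset lpt}) (w : lpt -> int) (delta : R)
    (x : complex.complex R * complex.complex R) (m : lpt) : R :=
  delta ^ (2 * w m) * abs2_char x m /
  \sum_(m' <- A) delta ^ (2 * w m') * abs2_char x m'.

Definition in_torus (x : complex.complex R * complex.complex R) : Prop :=
  x.1 <> complex.Complex 0 0 /\ x.2 <> complex.Complex 0 0.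

(* p : A -> R is the value (rho_m(y))_{m in A} of the continuous extension of
   rho at some point y of P_Sigma.  Since P_Sigma is compact and the torus is
   dense in it, the set of such values is exactly the closure (in R^A) of
   {(rho_m(x))_m : x in (C^* )^2}. *)
Definition rho_value_on_PSigma (A : {fset lpt}) (w : lpt -> int) (delta : R)
    (p : lpt -> R) : Prop :=
  forall eps : R, 0 < eps -> exists x, in_torus x /\
    forall m, m \in A -> `| rho A w delta x m - p m | < eps.

Definition Sset (A : {fset lpt}) (p : lpt -> R) (delta a : R) : {fset lpt} :=
  [fset m in A | (delta `^ a < p m)%R]%fset.

End Defs.

(* Main.v *)
Require Import Defs.
From HB Require Import structures.
From mathcomp Require Import all_boot all_order all_algebra.
From mathcomp Require Import finmap.
From mathcomp Require Import all_classical all_reals all_analysis.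
From mathcomp Require complex.
From mathcomp Require Import ring lra.
Import Order.TTheory GRing.Theory Num.Theory.
Local Open Scope ring_scope.


Lemma unif (R : realType) (T : eqType) (s : seq T) (P : T -> R -> Prop) :
  (forall x g g', 0 < g' -> g' <= g -> P x g -> P x g') ->
  (forall x, x \in s -> exists g, 0 < g /\ P x g) ->
  exists g, 0 < g /\ forall x, x \in s -> P x g.
Proof.
move=> mono; elim: s => [|y s IH] h.
  by exists 1; split=> // x.
have [g1 [g1p Pg1]] := h y (mem_head _ _).
have [g2 [g2p Pg2]] : exists g, 0 < g /\ forall x, x \in s -> P x g.
  by apply: IH => x xs; apply: h; rewrite in_cons xs orbT.
exists (Num.min g1 g2); split; first by rewrite lt_min g1p g2p.
move=> x; rewrite in_cons => /orP [/eqP ->|xs].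
  apply: (mono _ g1); [by rewrite lt_min g1p g2p | by rewrite ge_min lexx | exact: Pg1].
apply: (mono _ g2); [by rewrite lt_min g1p g2p | by rewrite ge_min lexx orbT | exact: Pg2].
Qed.

Lemma argmax (R : realType) (T : eqType) (s : seq T) (f : T -> R) :
  s != [::] -> exists2 m0, m0 \in s & forall m, m \in s -> f m <= f m0.
Proof.
elim: s => [//|y s IH] _.
case: (eqVneq s [::]) => [->|sne].
  by exists y; rewrite ?mem_head // => m; rewrite inE => /eqP ->.
have [m1 m1s hm1] := IH sne.
case: (lerP (f y) (f m1)) => hy.
  exists m1; first by rewrite in_cons m1s orbT.
  by move=> m; rewrite in_cons => /orP [/eqP ->//|]; apply: hm1.
exists y; first exact: mem_head.
move=> m; rewrite in_cons => /orP [/eqP ->//|ms].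
by apply: le_trans (hm1 _ ms) (ltW hy).
Qed.

Lemma ln_exprz (R : realType) (x : R) (z : int) : 0 < x -> ln (x ^ z) = z%:~R * ln x.
Proof.
move=> x0; case: z => n.
  by rewrite lnXn // -mulr_natl.
change (ln ((x ^+ n.+1)^-1) = (Negz n)%:~R * ln x).
rewrite lnV ?posrE ?exprn_gt0 // lnXn // NegzE mulrNz mulNr -mulr_natl.
by [].
Qed.

Lemma sum_const (R : realType) (T : Type) (s : seq T) (c : R) :
  \sum_(i <- s) c = c * (size s)%:R.
Proof.
elim: s => [|y s IH]; first by rewrite big_nil mulr0.
by rewrite big_cons IH /= -nat1r mulrDr mulr1.
Qed.

Lemma sqabs_gt0 (R : realType) (z : complex.complex R) :
  z <> complex.Complex 0 0 -> 0 < sqabs z.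
Proof.
case: z => r i /= h; rewrite /sqabs /=.
have : r != 0 \/ i != 0.
  case: (eqVneq r 0) => hr; last by left.
  case: (eqVneq i 0) => hi; last by right.
  by exfalso; apply: h; rewrite hr hi.
case=> h'.
  have := sqr_ge0 i; have : 0 < r ^+ 2 by rewrite exprn_even_gt0.
  lra.
have := sqr_ge0 r; have : 0 < i ^+ 2 by rewrite exprn_even_gt0.
lra.
Qed.

Lemma sum_ind (R : realType) (s : seq lpt) (u : lpt) (f : lpt -> R) :
  u \in s -> uniq s -> \sum_(v <- s) (v == u)%:R * f v = f u.
Proof.
move=> us su; rewrite (bigD1_seq u) //= eqxx mul1r big1 ?addr0 //.
by move=> v /negPf ->; rewrite mul0r.
Qed.


Lemma core (R : realType) (V A : {fset lpt}) (w : lpt -> int)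
    (Z : {fset {fset lpt}}) (gam : R) :
  0 < gam ->
  (forall m, m \in A -> in_conv V (rx R m) (ry R m)) ->
  (forall px py : R, in_conv V px py -> exists2 S, S \in Z & in_conv S px py) ->
  (forall S, S \in Z -> (S `<=` A)%fset) ->
  (forall S T, S \in Z -> (T `<=` S)%fset -> T != fset0 -> T \in Z) ->
  (forall S, S \in Z -> exists c0 c1 c2 : R, forall m, m \in A ->
      (m \in S -> (w m)%:~R = c0 + c1 * rx R m + c2 * ry R m) /\
      (m \notin S -> c0 + c1 * rx R m + c2 * ry R m + gam <= (w m)%:~R)) ->
  forall (al be hmin : R) (S : {fset lpt}), (S `<=` A)%fset -> S != fset0 ->
  (forall m, m \in A -> hmin <= (w m)%:~R + al * rx R m + be * ry R m) ->
  (forall m, m \in S -> (w m)%:~R + al * rx R m + be * ry R m < hmin + gam / (size S)%:R) ->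
  S \in Z.
Proof.
move=> gam0 hV hcov hsub hface hgap al be hmin S SA Sne hmin_le hnear.
have SAm : forall m, m \in S -> m \in A by move=> m; apply: (fsubsetP SA).
set k : R := (size S)%:R.
have kpos : 0 < k by rewrite /k ltr0n cardfs_gt0.
have [Lam hLam] : exists Lam : lpt -> lpt -> R, forall m, m \in A ->
   [/\ (forall v, v \in V -> 0 <= Lam m v), \sum_(v <- V) Lam m v = 1,
       \sum_(v <- V) Lam m v * rx R v = rx R m & \sum_(v <- V) Lam m v * ry R v = ry R m].
  have /boolp.choice [Lam hL] : forall m, exists lam : lpt -> R, m \in A ->
   [/\ (forall v, v \in V -> 0 <= lam v), \sum_(v <- V) lam v = 1,
       \sum_(v <- V) lam v * rx R v = rx R m & \sum_(v <- V) lam v * ry R v = ry R m].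
    move=> m; case: (boolP (m \in A)) => mA; last by exists (fun _ => 0).
    have [lam [h1 [h2 [h3 h4]]]] := hV m mA.
    by exists lam => _; split.
  by exists Lam.
set qx := (\sum_(m <- S) rx R m) / k.
set qy := (\sum_(m <- S) ry R m) / k.
have hq : in_conv V qx qy.
  exists (fun v => (\sum_(m <- S) Lam m v) / k); split; [|split; [|split]].
  - move=> v vV; apply: divr_ge0; last exact: ltW.
    rewrite big_seq; apply: sumr_ge0 => m mS.
    by have [h1 _ _ _] := hLam m (SAm m mS); apply: h1.
  - rewrite -mulr_suml exchange_big /=.
    rewrite big_seq (eq_bigr (fun _ => 1)); last first.
      by move=> m mS; have [_ h2 _ _] := hLam m (SAm m mS).
    by rewrite -big_seq sum_const mul1r divff // gt_eqF.
  - rewrite /qx; under eq_bigr do rewrite mulrAC mulr_suml.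
    rewrite -mulr_suml exchange_big /=; congr (_ / _).
    rewrite big_seq [RHS]big_seq; apply: eq_bigr => m mS.
    by have [_ _ h3 _] := hLam m (SAm m mS).
  - rewrite /qy; under eq_bigr do rewrite mulrAC mulr_suml.
    rewrite -mulr_suml exchange_big /=; congr (_ / _).
    rewrite big_seq [RHS]big_seq; apply: eq_bigr => m mS.
    by have [_ _ _ h4] := hLam m (SAm m mS).
have [sg sgZ [mu [mu0 [mu1 [mux muy]]]]] := hcov _ _ hq.
have [c0 [c1 [c2 hc]]] := hgap sg sgZ.
pose F := fun X Y : R => c0 + (c1 + al) * X + (c2 + be) * Y.
pose H := fun m => (w m)%:~R + al * rx R m + be * ry R m.
have Fq : F qx qy = \sum_(v <- sg) mu v * F (rx R v) (ry R v).
  have -> : \sum_(v <- sg) mu v * F (rx R v) (ry R v) =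
     \sum_(v <- sg) (c0 * mu v + (c1 + al) * (mu v * rx R v) + (c2 + be) * (mu v * ry R v)).
    by apply: eq_bigr => v _; rewrite /F; ring.
  by rewrite !big_split /= -!mulr_sumr mu1 mux muy mulr1.
have Fq_ge : hmin <= F qx qy.
  rewrite Fq; apply: (@le_trans _ _ (\sum_(v <- sg) mu v * hmin)).
    by rewrite -mulr_suml mu1 mul1r.
  rewrite big_seq [X in _ <= X]big_seq; apply: ler_sum => v vsg.
  apply: ler_wpM2l; first exact: mu0.
  have vA : v \in A by apply: (fsubsetP (hsub _ sgZ)).
  have [e _] := hc v vA; have := hmin_le v vA; rewrite /F (e vsg); lra.
have kF : k * F qx qy = \sum_(m <- S) F (rx R m) (ry R m).
  have -> : \sum_(m <- S) F (rx R m) (ry R m) =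
     \sum_(m <- S) (c0 * 1 + (c1 + al) * rx R m + (c2 + be) * ry R m).
    by apply: eq_bigr => v _; rewrite /F; ring.
  rewrite !big_split /= -!mulr_sumr sum_const mul1r /F /qx /qy -/k.
  by field; rewrite gt_eqF.
apply: (hface sg S sgZ _ Sne).
apply/fsubsetP => m mS; apply/negPn/negP => mnsg.
have mA := SAm m mS.
have h1 : \sum_(m <- S) F (rx R m) (ry R m) <= \sum_(m <- S) H m - gam.
  rewrite (big_fsetD1 m mS) [X in _ <= X - _](big_fsetD1 m mS) /=.
  have e1 : F (rx R m) (ry R m) <= H m - gam.
    by have [_ e] := hc m mA; have := e mnsg; rewrite /F /H; lra.
  suff : \sum_(i <- (S `\ m)%fset) F (rx R i) (ry R i) <= \sum_(i <- (S `\ m)%fset) H i.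
    lra.
  rewrite big_seq [X in _ <= X]big_seq; apply: ler_sum => v.
  rewrite in_fsetD1 => /andP [vm vS].
  have vA := SAm v vS.
  have [e e'] := hc v vA; rewrite /F /H.
  case: (boolP (v \in sg)) => vsg.
    by rewrite (e vsg); lra.
  have := e' vsg; lra.
have h2 : \sum_(m <- S) H m < k * hmin + gam.
  rewrite (big_fsetD1 m mS) /=.
  have e1 := hnear m mS; rewrite -/k in e1.
  have e2 : \sum_(i <- (S `\ m)%fset) H i <= \sum_(i <- (S `\ m)%fset) (hmin + gam / k).
    rewrite big_seq [X in _ <= X]big_seq; apply: ler_sum => v.
    rewrite in_fsetD1 => /andP [vm vS].
    by apply: ltW; have := hnear v vS; rewrite -/k.
  rewrite sum_const in e2.
  have ek : k = (size (S `\ m)%fset)%:R + 1.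
    by rewrite /k (cardfsD1 m S) mS natrD addrC.
  have e3 : (hmin + gam / k) * (size (S `\ m)%fset)%:R + (hmin + gam / k) = k * hmin + gam.
    rewrite -{2}[hmin + gam / k]mulr1 -mulrDr -ek; field; by rewrite gt_eqF.
  rewrite /H in e1 e2 *; lra.
have h3 : k * hmin <= k * F qx qy by apply: ler_wpM2l; [exact: ltW|].
move: h1 h2 h3; rewrite kF; lra.
Qed.



Theorem lemma3p4 (R : realType) (V A : {fset lpt}) (w : lpt -> int)
    (Z : {fset {fset lpt}}) :
  lattice_polygon_points R V A ->
  induces R V A w Z ->
  exists a : R, 0 < a /\
    exists delta0 : R, 0 < delta0 /\ delta0 <= 1 /\
      forall delta : R, 0 < delta -> delta < delta0 ->
        forall p : lpt -> R, rho_value_on_PSigma A w delta p ->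
          Sset A p delta a \in Z.
Proof.
move=> [[u [v [t [uV _ _ _]]]] hA] [[hne hface hint hcov] hsub hsing hempty hreg].
have [gam [gam0 hgap]] : exists gam : R, 0 < gam /\ forall S, S \in Z ->
    exists c0 c1 c2 : R, forall m, m \in A ->
      (m \in S -> (w m)%:~R = c0 + c1 * rx R m + c2 * ry R m) /\
      (m \notin S -> c0 + c1 * rx R m + c2 * ry R m + gam <= (w m)%:~R).
  apply: (@unif R _ Z (fun S g => exists c0 c1 c2 : R, forall m, m \in A ->
      (m \in S -> (w m)%:~R = c0 + c1 * rx R m + c2 * ry R m) /\
      (m \notin S -> c0 + c1 * rx R m + c2 * ry R m + g <= (w m)%:~R))).
    move=> S g g' g'0 g'g [c0 [c1 [c2 h]]]; exists c0, c1, c2 => m mA.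
    have [h1 h2] := h m mA; split=> // mS; have := h2 mS; lra.
  move=> S SZ; have [c0 [c1 [c2 h]]] := hreg S SZ.
  have [g [g0 hg]] : exists g : R, 0 < g /\ forall m, m \in A -> (m \notin S ->
        c0 + c1 * rx R m + c2 * ry R m + g <= (w m)%:~R).
    apply: (@unif R _ A (fun m g => m \notin S ->
        c0 + c1 * rx R m + c2 * ry R m + g <= (w m)%:~R)).
      by move=> m g g' _ g'g h1 mS; have := h1 mS; lra.
    move=> m mA; case: (boolP (m \in S)) => mS.
      by exists 1; split=> //; rewrite mS.
    exists ((w m)%:~R - (c0 + c1 * rx R m + c2 * ry R m)); split.
      by have [_ h2] := h m mA; have := h2 mS; lra.
    by move=> _; lra.
  exists g; split=> //; exists c0, c1, c2 => m mA; split.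
    exact: (h m mA).1.
  exact: hg.
have uA : u \in A.
  apply/hA; exists (fun x => (x == u)%:R); split; [|split; [|split]].
  - by move=> x _; rewrite ler0n.
  - transitivity (\sum_(x <- V) (x == u)%:R * (1:R)).
      by apply: eq_bigr => x _; rewrite mulr1.
    exact: (@sum_ind R _ _ (fun _ => (1:R)) uV (fset_uniq V)).
  - exact: (@sum_ind R _ _ _ uV (fset_uniq V)).
  - exact: (@sum_ind R _ _ _ uV (fset_uniq V)).
have Ane : (A : seq lpt) != [::].
  have uA' : u \in (A : seq lpt) := uA.
  by move: uA'; case: (A : seq lpt).
pose N : R := (size A)%:R.
have N1 : 1 <= N by rewrite /N ler1n lt0n size_eq0.
have N0 : 0 < N by lra.
pose a := gam / N.
have a0 : 0 < a by rewrite divr_gt0.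
have l2N : ln 2 <= ln (2 * N).
  by rewrite ler_ln ?posrE //; [lra | lra].
have l2 : 0 < ln (2 : R) by rewrite ln_gt0 //; lra.
exists a; split=> //.
pose d0 := expR (- ln (2 * N) / a).
exists d0; split; first exact: expR_gt0.
split.
  rewrite expR_le1 mulNr oppr_le0 divr_ge0 //; [lra | exact: ltW].
move=> d d0p dlt p hp.
have lnd : ln d * a < - ln (2 * N).
  have : ln d < ln d0 by rewrite ltr_ln ?posrE // expR_gt0.
  by rewrite /d0 expRK ltr_pdivlMr.
pose L := - ln d.
have L0 : 0 < L by rewrite /L; nra.
pose T := d `^ a.
have T0 : 0 < T by apply: powR_gt0.
have lnT : ln T = - a * L by rewrite /T ln_powR /L; ring.
have T2N : T * (2 * N) < 1.
  have e : T = expR (ln T) by rewrite lnK // posrE.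
  have : T < (2 * N)^-1.
    rewrite e -(lnK (x := (2 * N)^-1)); last by rewrite posrE invr_gt0; lra.
    rewrite ltr_expR lnV ?posrE; last lra.
    by rewrite lnT /L; lra.
  by rewrite -ltr_pdivlMr ?mul1r //; lra.
have [x [[x1 x2] hx]] := hp (T / 2) (ltac:(lra)).
have s10 := @sqabs_gt0 R _ x1; have s20 := @sqabs_gt0 R _ x2.
pose c := fun m : lpt => d ^ (2 * w m) * abs2_char x m.
have cpos : forall m, 0 < c m.
  move=> m; rewrite /c /abs2_char; apply: mulr_gt0; first exact: exprz_gt0.
  by apply: mulr_gt0; apply: exprz_gt0.
have [m0 m0A hm0] := @argmax R _ A c Ane.
pose D := \sum_(m <- A) c m.
have DgeC : c m0 <= D.
  rewrite /D (big_fsetD1 m0 m0A) /= lerDl.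
  by apply: sumr_ge0 => m _; apply: ltW.
have DleN : D <= N * c m0.
  rewrite /D (@le_trans _ _ (\sum_(m <- A) c m0)) //.
    by rewrite big_seq [X in _ <= X]big_seq; apply: ler_sum => m mA; apply: hm0.
  by rewrite sum_const mulrC.
have D0 : 0 < D by apply: lt_le_trans (cpos m0) DgeC.
have rhoE : forall m, rho A w d x m = c m / D by [].
pose H := fun m => (w m)%:~R + (- ln (sqabs x.1) / (2 * L)) * rx R m
                  + (- ln (sqabs x.2) / (2 * L)) * ry R m.
have lnc : forall m, ln (c m) = - (2 * L) * H m.
  move=> m; rewrite /c /abs2_char lnM ?posrE ?exprz_gt0 //; last first.
    by apply: mulr_gt0; apply: exprz_gt0.
  rewrite lnM ?posrE ?exprz_gt0 // !ln_exprz // intrM /H /rx /ry /L.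
  have ld : ln d < 0 by move: L0; rewrite /L; lra.
  by field; rewrite lt_eqF.
have SinA : forall m, m \in Sset A p d a -> m \in A /\ T < p m.
  by move=> m; rewrite /Sset inE => /andP [].
have SA : (Sset A p d a `<=` A)%fset.
  by apply/fsubsetP => m /SinA [].
apply: (@core R V A w Z gam gam0 (fun m mA => (hA m).1 mA)
   (fun px py h => (hcov px py).1 h) hsub hface hgap
   (- ln (sqabs x.1) / (2 * L)) (- ln (sqabs x.2) / (2 * L)) (H m0) _ SA).
- apply/eqP => e.
  have : m0 \in Sset A p d a; last by rewrite e inE.
  rewrite /Sset inE /=; apply/andP; split=> //; rewrite -/T.
  have := hx m0 m0A; rewrite rhoE => /ltr_normlP [h1 h2].
  have r0 : 1 <= N * (c m0 / D) by rewrite mulrA ler_pdivlMr // mul1r.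
  move: r0 h1 h2; set r := c m0 / D => r0 h1 h2.
  nra.
- move=> m mA.
  have := hm0 m mA => cle.
  have : ln (c m) <= ln (c m0) by rewrite ler_ln ?posrE.
  rewrite !lnc => h.
  have : 2 * L * H m0 <= 2 * L * H m by move: h; rewrite !mulNr lerN2.
  by rewrite ler_pM2l //; move: L0; rewrite /L; lra.
- move=> m mS; have [mA Tp] := SinA m mS.
  have rm : T / 2 < c m / D.
    by have := hx m mA; rewrite rhoE => /ltr_normlP [h1 h2]; lra.
  rewrite ltr_pdivlMr // in rm.
  have cm : T / 2 * c m0 < c m by nra.
  have : ln (T / 2 * c m0) < ln (c m).
    by rewrite ltr_ln ?posrE //; apply: mulr_gt0 => //; lra.
  have e : ln (T / 2 * c m0) = ln T - ln 2 + ln (c m0).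
    have T20 : 0 < T / 2 by lra.
    rewrite lnM ?posrE //; congr (_ + _).
    by rewrite ln_div ?posrE //; lra.
  rewrite e lnT !lnc => hl.
  have aL : ln 2 < a * L.
    have : ln (2 * N) < - (ln d * a) by lra.
    rewrite /L mulrN mulrC; lra.
  have hX : 2 * L * (H m - H m0 - a) < 0 by lra.
  have ha : H m < H m0 + a.
    have : H m - H m0 - a < 0.
      by rewrite -(pmulr_rlt0 _ (x := 2 * L)) //; move: L0; rewrite /L; lra.
    lra.
  apply: (lt_le_trans ha); rewrite lerD2l ler_pM2l // lef_pV2 ?posrE ?ltr0n //.
  - by rewrite /N ler_nat fsubset_leq_card.
  - by rewrite cardfs_gt0; apply/fset0Pn; exists u.
  - by rewrite cardfs_gt0; apply/fset0Pn; exists m.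
Qed.
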